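(* Let $N\ge 2$ and $d\ge 1$ be integers and let $f:\mathbb{Z}_N^d\to\mathbb{C}$ be a nonzero function with support $E=\mathrm{supp}(f)$ and Fourier support $\Sigma=\mathrm{supp}(\hat f)$. Then \[ N^d\le |E|\left(\Lambda_2(\Sigma)-|\Sigma|^2\left(1-\frac{N^d}{|E||\Sigma|}\right)-|\Sigma|(|\Sigma|-1)\left(1-\sqrt{\frac{N^d}{|E||\Sigma|}}\sqrt{\frac{\Lambda_2(E)}{|E|^3}}\right)\right)^{1/3} \] and \[ N^d\le |\Sigma|\left(\Lambda_2(E)-|E|^2\left(1-\frac{N^d}{|E||\Sigma|}\right)-|E|(|E|-1)\left(1-\sqrt{\frac{N^d}{|E||\Sigma|}}\sqrt{\frac{\Lambda_2(\Sigma)}{|\Sigma|^3}}\right)\right)^{1/3}. \]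
   Context: $\mathbb{Z}_N=\mathbb{Z}/N\mathbb{Z}$. The discrete Fourier transform of $f:\mathbb{Z}_N^d\to\mathbb{C}$ is $\hat f(m)=N^{-d/2}\sum_{x\in\mathbb{Z}_N^d}f(x)e^{-2\pi i\, m\cdot x/N}$ for $m\in\mathbb{Z}_N^d$. The support of a function is the set of points where it is nonzero. For $A\subseteq\mathbb{Z}_N^d$, the additive energy is $\Lambda_2(A)=\#\{(x_1,x_2,x_3,x_4)\in A^4: x_1+x_2=x_3+x_4\}$. *)

(* Defs.v *)
From HB Require Import structures.
From mathcomp Require Import all_boot all_order all_algebra.
From mathcomp Require Import reals exp trigo.
From mathcomp Require Import complex.
Set Implicit Arguments. Unset Strict Implicit. Unset Printing Implicit Defensive.
Import Order.TTheory GRing.Theory Num.Theory.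
Local Open Scope ring_scope.

(* Z_N^d is represented by row vectors 'rV['Z_N]_d (faithful for N >= 2). *)

(* the dot product m . x, computed on representatives in {0,..,N-1} *)
Definition dotZ (N d : nat) (m x : 'rV['Z_N]_d) : nat :=
  (\sum_(i < d) (m ord0 i : nat) * (x ord0 i : nat))%N.

Definition expi (R : realType) (t : R) : R[i] := (cos t +i* sin t)%C.

Definition dft (R : realType) (N d : nat) (f : 'rV['Z_N]_d -> R[i])
  (m : 'rV['Z_N]_d) : R[i] :=
  (((Num.sqrt (N%:R : R)) ^- d)%:C)%C *
  \sum_(x : 'rV['Z_N]_d)
     f x * expi (- (2 * pi * (dotZ m x)%:R / N%:R)).

Definition supp (R : realType) (N d : nat) (f : 'rV['Z_N]_d -> R[i])
  : {set 'rV['Z_N]_d} := [set x | f x != 0].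

Definition energy (N d : nat) (A : {set 'rV['Z_N]_d}) : nat :=
  #|[set p : ('rV['Z_N]_d * 'rV['Z_N]_d) * ('rV['Z_N]_d * 'rV['Z_N]_d) |
     [&& p.1.1 \in A, p.1.2 \in A, p.2.1 \in A, p.2.2 \in A &
         p.1.1 + p.1.2 == p.2.1 + p.2.2]]|.

(* real cube root x^{1/3} (odd, defined on all of R) *)
Definition cbrt (R : realType) (x : R) : R :=
  if 0 <= x then powR x (3%:R^-1) else - powR (- x) (3%:R^-1).

(* Main.v *)
Require Import Defs.
From HB Require Import structures.
From mathcomp Require Import all_boot all_order all_algebra.
From mathcomp Require Import reals exp trigo.
From mathcomp Require Import complex.
From mathcomp Require Import ring lra.
Import Order.TTheory GRing.Theory Num.Theory.
Local Open Scope ring_scope.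

Section Trig.
Variable R : realType.

Lemma expiD (a b : R) : expi (a + b) = expi a * expi b.
Proof. by rewrite /expi cosD sinD; simpc; congr (_ +i* _)%C; ring. Qed.

Lemma expi0 : expi (0 : R) = 1.
Proof. by rewrite /expi cos0 sin0. Qed.

Lemma expiN (a : R) : expi (- a) = (expi a)^*.
Proof. by rewrite /expi cosN sinN. Qed.

Lemma expiJ (a : R) : expi a * (expi a)^* = 1.
Proof. by rewrite -expiN -expiD subrr expi0. Qed.

Lemma expi2pi : expi (pi *+ 2 : R) = 1.
Proof. by rewrite /expi cos2pi sin2pi. Qed.

Lemma expi_ne1 (t : R) : 0 < t < pi *+ 2 -> expi t != 1.
Proof.
move=> /andP[t0 t2]; apply/eqP => /eqP; rewrite eq_complex /= => /andP[/eqP c1 /eqP s0].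
have [tp|tp|tp] := ltgtP t pi.
- by have := sin_gt0_pi (x:=t); rewrite t0 tp s0 ltxx => /(_ isT).
- have h : 0 < t - pi < pi by rewrite subr_gt0 tp /= ltrBlDr -mulr2n.
  have e : sin (t - pi) = 0 by apply/eqP; rewrite -oppr_eq0 -sinDpi subrK s0.
  by have := sin_gt0_pi h; rewrite e ltxx.
- move: c1; rewrite tp cospi => /eqP; rewrite -subr_eq0 -opprD oppr_eq0.
  by rewrite -(natrD _ 1 1) pnatr_eq0.
Qed.
End Trig.

Lemma sum_pick (C : pzRingType) (I : finType) (i : I) (F : I -> C) :
  \sum_j (i == j)%:R * F j = F i.
Proof.
rewrite (bigD1 i) //= eqxx mul1r big1 ?addr0 // => j /negbTE.
by rewrite eq_sym => ->; rewrite mul0r.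
Qed.

Section Kernel.
Variable R : realType.
Variables (N d : nat).
Hypothesis hN : (1 < N)%N.

Definition ee (k : nat) : R[i] := expi (2 * pi * k%:R / N%:R).

Lemma N0 : (N%:R : R) != 0.
Proof. by rewrite pnatr_eq0 -lt0n ltnW. Qed.

Lemma eeD a b : ee (a + b) = ee a * ee b.
Proof. by rewrite /ee natrD mulrDr mulrDl expiD. Qed.

Lemma ee0 : ee 0 = 1.
Proof. by rewrite /ee mulr0 mul0r expi0. Qed.

Lemma eeMN q : ee (q * N) = 1.
Proof.
elim: q => [|q IH]; first by rewrite mul0n ee0.
by rewrite mulSn eeD IH mulr1 /ee mulfK ?N0 // mulr_natl expi2pi.
Qed.

Lemma ee_mod k : ee k = ee (k %% N).
Proof. by rewrite {1}(divn_eq k N) eeD eeMN mul1r. Qed.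

Lemma ee_ne1 k : (0 < k < N)%N -> ee k != 1.
Proof.
move=> /andP[k0 kN]; apply: expi_ne1.
have -> : 2 * pi * k%:R / N%:R = (pi *+ 2) * (k%:R / N%:R :> R).
  by rewrite -[pi *+ 2]mulr_natl !mulrA.
have p2 : (0 : R) < pi *+ 2 by rewrite pmulrn_rgt0 // pi_gt0.
have Np : (0 : R) < N%:R by rewrite ltr0n ltnW.
rewrite mulr_gt0 //= ?divr_gt0 ?ltr0n //; last by apply: ltn_trans kN.
by rewrite gtr_pMr ?divr_gt0 ?ltr0n // ltr_pdivrMr // mul1r ltr_nat.
Qed.

Definition K (m x : 'rV['Z_N]_d) : R[i] := ee (dotZ m x).

Lemma valZ (a : 'Z_N) : (a < N)%N.
Proof. by have := ltn_ord a; move: (nat_of_ord a) => k; rewrite Zp_cast. Qed.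

Lemma KE m x : K m x = \prod_(i < d) ee ((m ord0 i : nat) * (x ord0 i : nat)).
Proof. by rewrite /K /dotZ (big_morph ee eeD ee0). Qed.

Lemma K_add m m' x : K (m + m') x = K m x * K m' x.
Proof.
rewrite !KE -big_split; apply: eq_bigr => i _ /=; rewrite mxE /=.
move: (nat_of_ord (m ord0 i)) (nat_of_ord (m' ord0 i)) (nat_of_ord (x ord0 i)) => a b c.
by rewrite Zp_cast // ee_mod modnMml -ee_mod mulnDl eeD.
Qed.

Lemma K_sym m x : K m x = K x m.
Proof. by rewrite /K /dotZ; congr ee; apply: eq_bigr => i _; rewrite mulnC. Qed.

Lemma K0 x : K 0 x = 1.
Proof. by rewrite KE big1 // => i _; rewrite mxE mul0n ee0. Qed.

Lemma KJ m x : K m x * (K m x)^* = 1.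
Proof. exact: expiJ. Qed.

Lemma K_opp m x : K (- m) x = (K m x)^*.
Proof.
have h1 : K (- m) x * K m x = 1 by rewrite -K_add addNr K0.
by rewrite -[LHS]mulr1 -(KJ m x) mulrA h1 mul1r.
Qed.

Lemma card_rV : #|{: 'rV['Z_N]_d}| = (N ^ d)%N.
Proof. by rewrite card_mx card_ord Zp_cast // mul1n. Qed.

Lemma sumK k : \sum_x K k x = (N ^ d)%:R * (k == 0)%:R.
Proof.
have [->|nz] := eqVneq k 0.
  under eq_bigr do rewrite K0.
  by rewrite sumr_const card_rV mulr1.
have [i ki] : exists i, k ord0 i != 0.
  case: (boolP [exists i, k ord0 i != 0]) => [/existsP //|/existsPn h].
  case/eqP: nz; apply/rowP => j; rewrite mxE; apply/eqP.
  by have := h j; rewrite negbK.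
pose y : 'rV['Z_N]_d := delta_mx 0 i.
have Ky : K k y = ee (k ord0 i).
  rewrite KE (bigD1 i) //= big1 => [|j ji]; last first.
    rewrite mxE (negbTE ji) andbF /=.
    by rewrite muln0 ee0.
  rewrite mxE !eqxx mulr1 /=.
  by rewrite modn_small ?muln1.
have Kne : K k y != 1.
  rewrite Ky ee_ne1 // valZ andbT lt0n.
  by apply: contra ki => /eqP h; apply/eqP/val_inj.
have hS : \sum_x K k x = K k y * \sum_x K k x.
  rewrite {1}(reindex_inj (addrI y)) /= mulr_sumr; apply: eq_bigr => x _.
  by rewrite !(K_sym k) K_add.
rewrite mulr0; apply/eqP.
have : (1 - K k y) * \sum_x K k x = 0 by rewrite mulrBl mul1r -hS subrr.
by move/eqP; rewrite mulf_eq0 subr_eq0 eq_sym (negbTE Kne).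
Qed.

Lemma O1 a b c e :
  \sum_x K a x * K b x * (K c x)^* * (K e x)^* =
  (N ^ d)%:R * (a + b == c + e)%:R.
Proof.
under eq_bigr do rewrite -!K_opp -!K_add.
by rewrite sumK -addrA -opprD subr_eq0.
Qed.

Lemma O2 a b c e :
  \sum_x (K x a)^* * (K x b)^* * K x c * K x e =
  (N ^ d)%:R * (a + b == c + e)%:R.
Proof.
transitivity (\sum_x K c x * K e x * (K a x)^* * (K b x)^*).
  by apply: eq_bigr => x _; rewrite !(K_sym x); ring.
by rewrite O1 eq_sym.
Qed.

Definition cc : R[i] := (((Num.sqrt (N%:R : R)) ^- d)%:C)%C.

Lemma cc_ge0 : 0 <= cc.
Proof. by rewrite /cc ler0c invr_ge0 exprn_ge0 // sqrtr_ge0. Qed.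

Lemma cc2 : cc ^+ 2 * (N ^ d)%:R = 1.
Proof.
rewrite /cc -rmorphXn -(rmorph_nat (real_complex R)) -rmorphM /=.
rewrite -exprVn -exprM mulnC exprM exprVn sqr_sqrtr ?ler0n // natrX.
by rewrite -exprMn mulVf ?N0 // expr1n.
Qed.

Lemma hg (f : 'rV['Z_N]_d -> R[i]) m : dft f m = cc * \sum_x f x * (K m x)^*.
Proof. by rewrite /dft; congr (_ * _); apply: eq_bigr => x _; rewrite /K /ee -expiN. Qed.

Lemma hf (f : 'rV['Z_N]_d -> R[i]) x : f x = cc * \sum_m dft f m * K m x.
Proof.
transitivity (cc * \sum_y cc * f y * \sum_m (K m y)^* * K m x); last first.
  congr (_ * _); under eq_bigr do rewrite mulr_sumr.
  rewrite exchange_big /=; apply: eq_bigr => m _.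
  rewrite hg -mulrA mulr_suml mulr_sumr; apply: eq_bigr => y _; ring.
have ortho y : \sum_m (K m y)^* * K m x = (N ^ d)%:R * (y == x)%:R.
  under eq_bigr => m _ do rewrite (K_sym m y) (K_sym m x) -K_opp -K_add.
  by rewrite sumK addrC subr_eq0 eq_sym.
under eq_bigr do rewrite ortho.
transitivity (cc * \sum_y (x == y)%:R * (cc * f y * (N ^ d)%:R)); last first.
  by congr (_ * _); apply: eq_bigr => y _; rewrite eq_sym; ring.
rewrite sum_pick.
transitivity ((cc ^+ 2 * (N ^ d)%:R) * f x); first by rewrite cc2 mul1r.
ring.
Qed.

End Kernel.

Lemma sum4E (T : pzRingType) (I : finType) (A B C D : I -> T) :
  (\sum_a A a) * (\sum_b B b) * (\sum_c C c) * (\sum_e D e) =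
  \sum_a \sum_b \sum_c \sum_e A a * B b * C c * D e.
Proof.
rewrite -!mulrA mulr_suml; apply: eq_bigr => a _; rewrite mulr_suml mulr_sumr.
apply: eq_bigr => b _; rewrite mulr_suml !mulr_sumr.
apply: eq_bigr => c _; rewrite !mulr_sumr.
by apply: eq_bigr => e _; rewrite !mulrA.
Qed.

Lemma sum4_lin (T : pzRingType) (I : finType) (F G H : I -> I -> I -> I -> T) :
  \sum_a \sum_b \sum_c \sum_e (F a b c e + G a b c e - H a b c e) =
  \sum_a \sum_b \sum_c \sum_e F a b c e + \sum_a \sum_b \sum_c \sum_e G a b c e
  - \sum_a \sum_b \sum_c \sum_e H a b c e.
Proof.
rewrite -big_split -sumrB; apply: eq_bigr => a _.
rewrite -big_split -sumrB; apply: eq_bigr => b _.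
rewrite -big_split -sumrB; apply: eq_bigr => c _.
by rewrite -big_split -sumrB.
Qed.

Lemma natr_orb (T : comPzRingType) (x y : bool) :
  (x || y)%:R = x%:R + y%:R - (x && y)%:R :> T.
Proof. by case: x; case: y => /=; ring. Qed.

Lemma natr_andb (T : comPzRingType) (x y : bool) :
  (x && y)%:R = x%:R * y%:R :> T.
Proof. by case: x; case: y => /=; ring. Qed.

Lemma diag4 (T : comPzRingType) (I : finType) (u v : I -> T) :
  \sum_a \sum_b \sum_c \sum_e
     ((a == c) && (b == e) || (a == e) && (b == c))%:R * (u a * u b * v c * v e)
  = 2 * (\sum_a u a * v a) ^+ 2 - \sum_a (u a * v a) ^+ 2.
Proof.
transitivity (\sum_a \sum_b \sum_c \sum_e
   ((a == c)%:R * ((b == e)%:R * (u a * u b * v c * v e))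
  + (b == c)%:R * ((a == e)%:R * (u a * u b * v c * v e))
  - (a == c)%:R * ((b == e)%:R * ((a == b)%:R * (u a * u b * v c * v e))))).
  apply: eq_bigr => a _; apply: eq_bigr => b _; apply: eq_bigr => c _.
  apply: eq_bigr => e _.
  have XY : ((a == c) && (b == e)) && ((a == e) && (b == c))
          = ((a == c) && (b == e)) && (a == b).
    by case: eqP => //= ->; case: eqP => //= ->; rewrite eq_sym andbb.
  by rewrite natr_orb XY !natr_andb; ring.
rewrite sum4_lin.
have P1 : \sum_a \sum_b \sum_c \sum_e
   (a == c)%:R * ((b == e)%:R * (u a * u b * v c * v e))
   = (\sum_a u a * v a) ^+ 2.
  transitivity (\sum_a \sum_b u a * u b * v a * v b).
    apply: eq_bigr => a _; apply: eq_bigr => b _.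
    under eq_bigr do rewrite -mulr_sumr sum_pick.
    by rewrite sum_pick.
  rewrite expr2 mulr_suml; apply: eq_bigr => a _; rewrite mulr_sumr.
  by apply: eq_bigr => b _; ring.
have P2 : \sum_a \sum_b \sum_c \sum_e
   (b == c)%:R * ((a == e)%:R * (u a * u b * v c * v e))
   = (\sum_a u a * v a) ^+ 2.
  transitivity (\sum_a \sum_b u a * u b * v b * v a).
    apply: eq_bigr => a _; apply: eq_bigr => b _.
    under eq_bigr do rewrite -mulr_sumr sum_pick.
    by rewrite sum_pick.
  rewrite expr2 mulr_suml; apply: eq_bigr => a _; rewrite mulr_sumr.
  by apply: eq_bigr => b _; ring.
have P3 : \sum_a \sum_b \sum_c \sum_e
   (a == c)%:R * ((b == e)%:R * ((a == b)%:R * (u a * u b * v c * v e)))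
   = \sum_a (u a * v a) ^+ 2.
  apply: eq_bigr => a _.
  transitivity (\sum_b (a == b)%:R * (u a * u b * v a * v b)).
    apply: eq_bigr => b _.
    under eq_bigr do rewrite -mulr_sumr sum_pick.
    by rewrite sum_pick.
  by rewrite sum_pick; ring.
by rewrite P1 P2 P3 mulr2n mulrDl mul1r.
Qed.

Lemma CS (C : numDomainType) (I : finType) (A : pred I) (a : I -> C) :
  (forall i, 0 <= a i) ->
  (\sum_(i in A) a i) ^+ 2 <= #|A|%:R * \sum_(i in A) a i ^+ 2.
Proof.
move=> a0; set S := \sum_(i in A) a i; set m : C := #|A|%:R.
have key : 0 <= \sum_(i in A) (a i * m - S) ^+ 2.
  by apply: sumr_ge0 => i _; rewrite -realEsqr rpredB // ?rpredM // ger0_real ?sumr_ge0.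
have E : \sum_(i in A) (a i * m - S) ^+ 2 = m * (m * \sum_(i in A) a i ^+ 2 - S ^+ 2).
  under eq_bigr do rewrite sqrrB.
  rewrite big_split sumrB /= sumr_const.
  rewrite sumrMnl -mulr_suml -mulr_suml -/S.
  under eq_bigr do rewrite exprMn.
  rewrite -mulr_suml -[_ *+ 2]mulr_natr -[_ *+ #|A|]mulr_natr -/m; ring.
have [m0|m0] := eqVneq m 0.
  have A0 : #|A| = 0%N by apply/eqP; rewrite -(pnatr_eq0 C) -/m m0.
  have -> : S = 0.
    rewrite /S big_pred0 // => i; apply/negP => Ai; move/eqP: A0; apply/negP.
    by rewrite -lt0n; apply/card_gt0P; exists i.
  by rewrite m0 mul0r expr2 mul0r.
have mp : 0 < m by rewrite lt_def m0 ler0n.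
by move: key; rewrite E pmulr_rge0 // subr_ge0.
Qed.

Lemma normK1 (C : numClosedFieldType) (z : C) : z * z^* = 1 -> `|z| = 1.
Proof. by move=> h; apply/eqP; rewrite -sqrp_eq1 // normCK h. Qed.

Lemma sum_supp (C : pzRingType) (V : finType) (G : V -> C) (F : V -> C) :
  (forall m, G m = 0 -> F m = 0) ->
  \sum_(m in [set m | G m != 0]) F m = \sum_m F m.
Proof.
move=> FG; rewrite [LHS]big_mkcond /=; apply: eq_bigr => m _; rewrite inE.
by case: eqVneq => [/FG ->|].
Qed.

Lemma sum_ind (C : pzRingType) (V : finType) (A : {set V}) :
  \sum_m (m \in A)%:R = #|A|%:R :> C.
Proof.
rewrite -sum1_card natr_sum [RHS]big_mkcond /=; apply: eq_bigr => m _.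
by case: (m \in A).
Qed.

Lemma supbound (C : numClosedFieldType) (V : finType) (n : nat) (c : C)
  (L : V -> V -> C) (H G : V -> C) :
  0 <= c -> c ^+ 2 * n%:R = 1 -> (forall m x, `|L m x| = 1) ->
  (forall x, H x = c * \sum_m G m * L m x) ->
  forall x, n%:R * `|H x| ^+ 2 <= #|[set m | G m != 0]|%:R * \sum_m `|G m| ^+ 2.
Proof.
move=> c0 cn L1 hH x.
set S := [set m | G m != 0].
have h1 : `|H x| <= c * \sum_(m in S) `|G m|.
  rewrite hH normrM ger0_norm //; apply: ler_wpM2l => //.
  apply: le_trans (ler_norm_sum _ _ _) _.
  rewrite sum_supp => [|m ->]; last by rewrite normr0.
  by apply: ler_sum => m _; rewrite normrM L1 mulr1.
have h2 : `|H x| ^+ 2 <= c ^+ 2 * (#|S|%:R * \sum_m `|G m| ^+ 2).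
  apply: le_trans (_ : (c * \sum_(m in S) `|G m|) ^+ 2 <= _).
    rewrite ler_pXn2r // ?inE ?normr_ge0 // nnegrE.
    by apply: mulr_ge0 => //; apply: sumr_ge0 => *; exact: normr_ge0.
  rewrite exprMn ler_wpM2l ?exprn_ge0 //.
  apply: le_trans (@CS C V (fun m => m \in S) (fun m => `|G m|) (fun m => normr_ge0 (G m))) _.
  rewrite ler_wpM2l //.
  by rewrite sum_supp // => m ->; rewrite normr0 expr0n.
have := ler_wpM2l (ler0n C n) h2.
set X := _ * \sum_m _.
suff -> : n%:R * (c ^+ 2 * X) = X by [].
by rewrite mulrA (mulrC n%:R) cn mul1r.
Qed.

Lemma expand4 (C : numClosedFieldType) (V : finZmodType) (n : nat)
  (L : V -> V -> C) (c : C) (F G : V -> C) :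
  (forall a b c' e, \sum_x L a x * L b x * (L c' x)^* * (L e x)^*
      = n%:R * (a + b == c' + e)%:R) ->
  0 <= c -> (forall x, F x = c * \sum_m G m * L m x) ->
  \sum_x `|F x| ^+ 4 = c ^+ 4 * n%:R * \sum_a \sum_b \sum_c' \sum_e
      (a + b == c' + e)%:R * (G a * G b * (G c')^* * (G e)^*).
Proof.
move=> O c0 hF.
have hFc x : (F x)^* = c * \sum_m (G m)^* * (L m x)^*.
  rewrite hF rmorphM rmorph_sum /= geC0_conj //; congr (_ * _).
  by apply: eq_bigr => m _; rewrite rmorphM.
transitivity (\sum_x c ^+ 4 * ((\sum_a G a * L a x) * (\sum_b G b * L b x)
   * (\sum_c' (G c')^* * (L c' x)^*) * (\sum_e (G e)^* * (L e x)^*))).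
  apply: eq_bigr => x _; rewrite -[4%N]/(2 * 2)%N exprM normCK hFc hF; ring.
under eq_bigr do rewrite sum4E.
rewrite -mulr_sumr -mulrA; congr (_ * _).
rewrite exchange_big mulr_sumr; apply: eq_bigr => a _.
rewrite exchange_big mulr_sumr; apply: eq_bigr => b _.
rewrite exchange_big mulr_sumr; apply: eq_bigr => c' _.
rewrite exchange_big mulr_sumr; apply: eq_bigr => e _.
transitivity (G a * G b * (G c')^* * (G e)^* *
  \sum_x L a x * L b x * (L c' x)^* * (L e x)^*).
  by rewrite mulr_sumr; apply: eq_bigr => x _; ring.
by rewrite O; ring.
Qed.

Lemma offb (C : numClosedFieldType) (V : finType) (n : nat) (bt : C) (G : V -> C) :
  0 <= bt -> (forall m, n%:R * `|G m| ^+ 2 <= bt) ->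
  forall a b c e, n%:R ^+ 2 * (`|G a| * `|G b| * `|G c| * `|G e|) <=
     bt ^+ 2 * ((G a != 0)%:R * (G b != 0)%:R * (G c != 0)%:R * (G e != 0)%:R).
Proof.
move=> b0 hG a b c e.
have [->|na] := eqVneq (G a) 0; first by rewrite normr0 !(mul0r, mulr0).
have [->|nb] := eqVneq (G b) 0; first by rewrite normr0 !(mul0r, mulr0).
have [->|nc] := eqVneq (G c) 0; first by rewrite normr0 !(mul0r, mulr0).
have [->|ne] := eqVneq (G e) 0; first by rewrite normr0 !(mul0r, mulr0).
rewrite /= !mulr1.
set x := `|G a| * `|G b|; set y := `|G c| * `|G e|.
have hx : n%:R ^+ 2 * x ^+ 2 <= bt ^+ 2.
  have -> : n%:R ^+ 2 * x ^+ 2 = (n%:R * `|G a| ^+ 2) * (n%:R * `|G b| ^+ 2).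
    by rewrite /x; ring.
  rewrite [bt ^+ 2]expr2; apply: ler_pM; [| |exact: hG|exact: hG];
    by rewrite mulr_ge0 ?ler0n ?exprn_ge0.
have hy : n%:R ^+ 2 * y ^+ 2 <= bt ^+ 2.
  have -> : n%:R ^+ 2 * y ^+ 2 = (n%:R * `|G c| ^+ 2) * (n%:R * `|G e| ^+ 2).
    by rewrite /y; ring.
  rewrite [bt ^+ 2]expr2; apply: ler_pM; [| |exact: hG|exact: hG];
    by rewrite mulr_ge0 ?ler0n ?exprn_ge0.
have xy : 0 <= n%:R ^+ 2 * (x - y) ^+ 2.
  apply: mulr_ge0; first by rewrite exprn_ge0.
  by rewrite -realEsqr rpredB // ger0_real // mulr_ge0.
have : 2 * (n%:R ^+ 2 * (x * y)) <= 2 * bt ^+ 2.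
  apply: le_trans (_ : n%:R ^+ 2 * x ^+ 2 + n%:R ^+ 2 * y ^+ 2 <= _).
    rewrite -subr_ge0.
    have -> : n%:R ^+ 2 * x ^+ 2 + n%:R ^+ 2 * y ^+ 2 - 2 * (n%:R ^+ 2 * (x * y))
       = n%:R ^+ 2 * (x - y) ^+ 2 by ring.
    exact: xy.
  have -> : 2 * bt ^+ 2 = bt ^+ 2 + bt ^+ 2 by ring.
  exact: lerD.
by rewrite ler_pM2l // /x /y !mulrA.
Qed.

Definition dlt {V : eqType} (a b c e : V) :=
  (a == c) && (b == e) || (a == e) && (b == c).

Lemma Qsplit (C : pzRingType) (V : finZmodType) (a b c e : V) :
  (a + b == c + e)%:R = (dlt a b c e)%:R + ((a + b == c + e) && ~~ dlt a b c e)%:R :> C.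
Proof.
rewrite /dlt; case D : (_ || _); last by rewrite andbT /= add0r.
have -> : (a + b == c + e) = true.
  by case/orP: D => /andP[/eqP -> /eqP ->]; rewrite ?eqxx // addrC eqxx.
by rewrite /= addr0.
Qed.

Lemma sum4_add (T : pzRingType) (I : finType) (F G : I -> I -> I -> I -> T) :
  \sum_a \sum_b \sum_c \sum_e (F a b c e + G a b c e) =
  \sum_a \sum_b \sum_c \sum_e F a b c e + \sum_a \sum_b \sum_c \sum_e G a b c e.
Proof.
rewrite -big_split; apply: eq_bigr => a _.
rewrite -big_split; apply: eq_bigr => b _.
rewrite -big_split; apply: eq_bigr => c _.
by rewrite -big_split.
Qed.

Lemma splitQ (C : pzRingType) (V : finZmodType) (F : V -> V -> V -> V -> C) :
  \sum_a \sum_b \sum_c \sum_e (a + b == c + e)%:R * F a b c e =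
  \sum_a \sum_b \sum_c \sum_e (dlt a b c e)%:R * F a b c e +
  \sum_a \sum_b \sum_c \sum_e ((a + b == c + e) && ~~ dlt a b c e)%:R * F a b c e.
Proof.
rewrite -sum4_add; do 4! (apply: eq_bigr => ? _).
by rewrite Qsplit mulrDl.
Qed.

Definition en {V : finZmodType} (A : {set V}) : nat :=
  #|[set p : (V * V) * (V * V) |
     [&& p.1.1 \in A, p.1.2 \in A, p.2.1 \in A, p.2.2 \in A &
         p.1.1 + p.1.2 == p.2.1 + p.2.2]]|.

Lemma pairE (C : pzRingType) (I J : finType) (F : I * J -> C) :
  \sum_p F p = \sum_i \sum_j F (i, j).
Proof. by rewrite pair_bigA; apply: eq_bigr => -[i j]. Qed.

Lemma enE (C : comPzRingType) (V : finZmodType) (A : {set V}) :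
  (en A)%:R = \sum_a \sum_b \sum_c \sum_e (a + b == c + e)%:R *
      ((a \in A)%:R * (b \in A)%:R * (c \in A)%:R * (e \in A)%:R) :> C.
Proof.
rewrite /en -sum1_card natr_sum [LHS]big_mkcond /= pairE [LHS]pairE.
apply: eq_bigr => a _; apply: eq_bigr => b _; rewrite pairE.
apply: eq_bigr => c _; apply: eq_bigr => e _.
rewrite inE /=.
case: (a \in A); case: (b \in A); case: (c \in A); case: (e \in A); rewrite /=;
  case: (a + b == c + e); rewrite /=; ring.
Qed.

Lemma parseval (C : numClosedFieldType) (V : finType) (K : V -> V -> C) (c : C)
  (f g : V -> C) :
  0 <= c -> (forall x, f x = c * \sum_m g m * K m x) ->
  (forall m, g m = c * \sum_x f x * (K m x)^*) ->
  \sum_m `|g m| ^+ 2 = \sum_x `|f x| ^+ 2.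
Proof.
move=> c0 hf hg.
have hfc x : (f x)^* = c * \sum_m (g m)^* * (K m x)^*.
  rewrite hf rmorphM rmorph_sum /= geC0_conj //; congr (_ * _).
  by apply: eq_bigr => m _; rewrite rmorphM.
symmetry.
transitivity (\sum_x \sum_m c * f x * (g m)^* * (K m x)^*).
  apply: eq_bigr => x _; rewrite normCK hfc mulr_sumr mulr_sumr.
  by apply: eq_bigr => m _; ring.
rewrite exchange_big; apply: eq_bigr => m _ /=.
transitivity ((g m)^* * (c * \sum_x f x * (K m x)^*)).
  by rewrite mulr_sumr mulr_sumr; apply: eq_bigr => x _; ring.
by rewrite -hg normCK mulrC.
Qed.

Lemma ler_sum4 (C : numDomainType) (I : finType) (F G : I -> I -> I -> I -> C) :
  (forall a b c e, F a b c e <= G a b c e) ->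
  \sum_a \sum_b \sum_c \sum_e F a b c e <= \sum_a \sum_b \sum_c \sum_e G a b c e.
Proof. by move=> h; do 4! (apply: ler_sum => ? _). Qed.

Lemma norm_sum4 (C : numDomainType) (I : finType) (F : I -> I -> I -> I -> C) :
  `|\sum_a \sum_b \sum_c \sum_e F a b c e| <= \sum_a \sum_b \sum_c \sum_e `|F a b c e|.
Proof.
apply: le_trans (ler_norm_sum _ _ _) _; apply: ler_sum => a _.
apply: le_trans (ler_norm_sum _ _ _) _; apply: ler_sum => b _.
apply: le_trans (ler_norm_sum _ _ _) _; apply: ler_sum => c _.
exact: ler_norm_sum.
Qed.

Lemma mul_sum4 (C : pzRingType) (I : finType) (k : C) (F : I -> I -> I -> I -> C) :
  k * \sum_a \sum_b \sum_c \sum_e F a b c e = \sum_a \sum_b \sum_c \sum_e k * F a b c e.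
Proof.
rewrite mulr_sumr; apply: eq_bigr => a _; rewrite mulr_sumr; apply: eq_bigr => b _.
by rewrite mulr_sumr; apply: eq_bigr => c _; rewrite mulr_sumr.
Qed.

Lemma wbound (C : numClosedFieldType) (V : finType) (n : nat) (bt : C) (G : V -> C)
  (om : V -> V -> V -> V -> bool) :
  0 <= bt -> (forall m, n%:R * `|G m| ^+ 2 <= bt) ->
  n%:R ^+ 2 * `|\sum_a \sum_b \sum_c \sum_e (om a b c e)%:R * (G a * G b * (G c)^* * (G e)^*)|
  <= bt ^+ 2 * \sum_a \sum_b \sum_c \sum_e (om a b c e)%:R *
       ((G a != 0)%:R * (G b != 0)%:R * (G c != 0)%:R * (G e != 0)%:R).
Proof.
move=> b0 hG.
apply: le_trans (_ : n%:R ^+ 2 * \sum_a \sum_b \sum_c \sum_e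
   `|(om a b c e)%:R * (G a * G b * (G c)^* * (G e)^*)| <= _).
  by rewrite ler_wpM2l ?exprn_ge0 ?ler0n // norm_sum4.
rewrite !mul_sum4; apply: ler_sum4 => a b c e.
rewrite !normrM !norm_conjC ger0_norm ?ler0n //.
rewrite mulrCA [X in _ <= X]mulrCA; apply: ler_wpM2l; first by rewrite ler0n.
exact: offb.
Qed.

Lemma sum_nonneg_real (C : numDomainType) (x : C) : 0 <= x -> x \is Num.real.
Proof. exact: ger0_real. Qed.

Lemma core (C : numClosedFieldType) (V : finZmodType) (n : nat) (K : V -> V -> C)
  (c : C) (f g : V -> C) :
  (0 < n)%N -> 0 <= c -> c ^+ 2 * n%:R = 1 ->
  (forall m x, K m x * (K m x)^* = 1) ->
  (forall a b c' e, \sum_x K a x * K b x * (K c' x)^* * (K e x)^*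
      = n%:R * (a + b == c' + e)%:R) ->
  (forall a b c' e, \sum_x (K x a)^* * (K x b)^* * K x c' * K x e
      = n%:R * (a + b == c' + e)%:R) ->
  (forall x, f x = c * \sum_m g m * K m x) ->
  (forall m, g m = c * \sum_x f x * (K m x)^*) ->
  (exists x, f x != 0) ->
  let e := (#|[set x | f x != 0]|)%:R : C in
  let s := (#|[set m | g m != 0]|)%:R : C in
  let LE := (en [set x | f x != 0])%:R : C in
  let LS := (en [set m | g m != 0])%:R : C in
  let nn := n%:R : C in
  exists P T F4 : C, [/\ 0 < P, 0 <= T, 0 <= F4, P ^+ 2 <= e * F4 &
     [/\ nn ^+ 3 * F4 <= nn ^+ 2 * (2 * P ^+ 2 - T)
                         + e ^+ 2 * P ^+ 2 * (LS - (2 * s ^+ 2 - s)),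
         nn ^+ 3 * T <= s ^+ 2 * P ^+ 2 * LE,
         P ^+ 2 <= s * T & nn <= e * s]].
Proof.
move=> n0 c0 cn KJ O1 O2 hf hg [x0 fx0] e s LE LS nn.
have K1 m x : `|K m x| = 1 := @normK1 C _ (KJ m x).
have K1' x m : `|(K m x)^*| = 1 by rewrite norm_conjC K1.
set P := \sum_x `|f x| ^+ 2.
set T := \sum_m `|g m| ^+ 4.
set F4 := \sum_x `|f x| ^+ 4.
have Pars : \sum_m `|g m| ^+ 2 = P := @parseval C V K c f g c0 hf hg.
have P0 : 0 < P.
  rewrite /P (bigD1 x0) //= ltr_wpDr ?sumr_ge0 // => [i _|]; first exact: exprn_ge0.
  by rewrite exprn_gt0 // normr_gt0.
have T0 : 0 <= T by apply: sumr_ge0 => i _; exact: exprn_ge0.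
have F40 : 0 <= F4 by apply: sumr_ge0 => i _; exact: exprn_ge0.
have supg m : nn * `|g m| ^+ 2 <= e * P.
  exact: (@supbound C V n c (fun x m => (K m x)^*) g f c0 cn K1' hg m).
have supf x : nn * `|f x| ^+ 2 <= s * P.
  by rewrite -Pars; exact: (@supbound C V n c K f g c0 cn K1 hf x).
have nn0 : 0 <= nn by exact: ler0n.
have c4 : c ^+ 4 * nn ^+ 2 = 1.
  by rewrite -[4%N]/(2 * 2)%N exprM -exprMn cn expr1n.
have O2' a b c' e' : \sum_m (K m a)^* * (K m b)^* * ((K m c')^*)^* * ((K m e')^*)^*
      = n%:R * (a + b == c' + e')%:R.
  by rewrite -O2; apply: eq_bigr => m _; rewrite !conjCK.
have E1 := @expand4 C V n K c f g O1 c0 hf.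
have E2 := @expand4 C V n (fun x m => (K m x)^*) c g f O2' c0 hg.
set W := \sum_a \sum_b \sum_c' \sum_e _ in E1.
set W' := \sum_a \sum_b \sum_c' \sum_e _ in E2.
have nF4 : nn * F4 = W.
  rewrite /F4 E1; transitivity ((c ^+ 4 * nn ^+ 2) * W); last by rewrite c4 mul1r.
  rewrite /nn; ring.
have nT : nn * T = W'.
  rewrite /T E2; transitivity ((c ^+ 4 * nn ^+ 2) * W'); last by rewrite c4 mul1r.
  rewrite /nn; ring.
have CS1 : P ^+ 2 <= e * F4.
  have -> : P = \sum_(x in [set x | f x != 0]) `|f x| ^+ 2.
    by rewrite sum_supp // => x ->; rewrite normr0 expr0n.
  have -> : F4 = \sum_(x in [set x | f x != 0]) (`|f x| ^+ 2) ^+ 2.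
    by rewrite sum_supp => [|x ->]; rewrite ?normr0 ?expr0n //;
       apply: eq_bigr => x _; rewrite -exprM.
  exact: (@CS C V (fun x => x \in [set x | f x != 0]) (fun x => `|f x| ^+ 2)
             (fun x => exprn_ge0 2 (normr_ge0 (f x)))).
have CS2 : P ^+ 2 <= s * T.
  have -> : P = \sum_(m in [set m | g m != 0]) `|g m| ^+ 2.
    by rewrite -Pars sum_supp // => m ->; rewrite normr0 expr0n.
  have -> : T = \sum_(m in [set m | g m != 0]) (`|g m| ^+ 2) ^+ 2.
    by rewrite sum_supp => [|m ->]; rewrite ?normr0 ?expr0n //;
       apply: eq_bigr => m _; rewrite -exprM.
  exact: (@CS C V (fun m => m \in [set m | g m != 0]) (fun m => `|g m| ^+ 2)
             (fun m => exprn_ge0 2 (normr_ge0 (g m)))).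
have F5 : nn <= e * s.
  rewrite -(ler_pM2r P0).
  apply: le_trans (_ : \sum_m (m \in [set m | g m != 0])%:R * (e * P) <= _).
    rewrite -{1}Pars mulr_sumr; apply: ler_sum => m _.
    rewrite inE; have [->|nz] := eqVneq (g m) 0.
      by rewrite normr0 expr0n /= !mulr0 mul0r.
    by rewrite mul1r supg.
  by rewrite -mulr_suml sum_ind -/s mulrA [s * e]mulrC lexx.
set ind := fun m : V => (g m != 0)%:R : C.
set indE := fun x : V => (f x != 0)%:R : C.
have LSE : LS = \sum_a \sum_b \sum_c' \sum_e (a + b == c' + e)%:R *
    (ind a * ind b * ind c' * ind e).
  rewrite /LS enE; do 4! (apply: eq_bigr => ? _); by rewrite !inE.
have LEE : LE = \sum_a \sum_b \sum_c' \sum_e (a + b == c' + e)%:R *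
    (indE a * indE b * indE c' * indE e).
  rewrite /LE enE; do 4! (apply: eq_bigr => ? _); by rewrite !inE.
have Dw : \sum_a \sum_b \sum_c' \sum_e (dlt a b c' e)%:R * (g a * g b * (g c')^* * (g e)^*)
     = 2 * P ^+ 2 - T.
  rewrite /dlt (@diag4 C V g (fun m => (g m)^*)) /=.
  under eq_bigr do rewrite -normCK.
  rewrite Pars; congr (_ - _); apply: eq_bigr => m _; by rewrite -normCK -exprM.
have Dind : \sum_a \sum_b \sum_c' \sum_e (dlt a b c' e)%:R * (ind a * ind b * ind c' * ind e)
     = 2 * s ^+ 2 - s.
  rewrite /dlt (@diag4 C V ind ind) /=.
  have ii m : ind m * ind m = ind m by rewrite /ind; case: (g m != 0); rewrite ?mulr1 ?mulr0.
  under eq_bigr do rewrite ii.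
  under [X in _ - X]eq_bigr do rewrite ii expr2 ii.
  have -> : \sum_m ind m = s by rewrite /s -sum_ind; apply: eq_bigr => m _; rewrite inE.
  by [].
have XS : \sum_a \sum_b \sum_c' \sum_e ((a + b == c' + e) && ~~ dlt a b c' e)%:R
     * (ind a * ind b * ind c' * ind e) = LS - (2 * s ^+ 2 - s).
  by rewrite LSE splitQ Dind addrC addKr.
set X := \sum_a \sum_b \sum_c' \sum_e ((a + b == c' + e) && ~~ dlt a b c' e)%:R
     * (g a * g b * (g c')^* * (g e)^*).
have WX : W = 2 * P ^+ 2 - T + X by rewrite /W splitQ Dw.
have Xr : X \is Num.real.
  have -> : X = nn * F4 - (2 * P ^+ 2 - T) by rewrite nF4 WX addrC addKr.
  apply: rpredB; first by apply: ger0_real; apply: mulr_ge0.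
  apply: rpredB; last exact: ger0_real T0.
  apply: ger0_real; apply: mulr_ge0; first exact: (ler0n C 2).
  exact: exprn_ge0 (ltW P0).
have Xb : nn ^+ 2 * X <= (e * P) ^+ 2 * (LS - (2 * s ^+ 2 - s)).
  rewrite -XS; apply: le_trans (_ : nn ^+ 2 * `|X| <= _).
    by rewrite ler_wpM2l ?exprn_ge0 // real_ler_norm.
  apply: (@wbound C V n (e * P) g) => //.
  by rewrite mulr_ge0 ?ler0n // ltW.
have W'b : nn ^+ 2 * W' <= (s * P) ^+ 2 * LE.
  rewrite LEE; apply: le_trans (_ : nn ^+ 2 * `|W'| <= _).
    rewrite ler_wpM2l ?exprn_ge0 // real_ler_norm // -nT.
    by rewrite ger0_real // mulr_ge0.
  apply: (@wbound C V n (s * P) f (fun a b c' e => a + b == c' + e)) => //.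
  by rewrite mulr_ge0 ?ler0n // ltW.
exists P, T, F4; split => //; split => //.
- have -> : nn ^+ 3 * F4 = nn ^+ 2 * W by rewrite -nF4; ring.
  rewrite WX mulrDr lerD2l.
  by apply: le_trans Xb _; rewrite exprMn mulrA lexx.
- have -> : nn ^+ 3 * T = nn ^+ 2 * W' by rewrite -nT; ring.
  by apply: le_trans W'b _; rewrite exprMn lexx.
Qed.

Lemma core_R (R : rcfType) (V : finZmodType) (n : nat) (K : V -> V -> R[i])
  (c : R[i]) (f g : V -> R[i]) :
  (0 < n)%N -> 0 <= c -> c ^+ 2 * n%:R = 1 ->
  (forall m x, K m x * (K m x)^* = 1) ->
  (forall a b c' e, \sum_x K a x * K b x * (K c' x)^* * (K e x)^*
      = n%:R * (a + b == c' + e)%:R) ->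
  (forall a b c' e, \sum_x (K x a)^* * (K x b)^* * K x c' * K x e
      = n%:R * (a + b == c' + e)%:R) ->
  (forall x, f x = c * \sum_m g m * K m x) ->
  (forall m, g m = c * \sum_x f x * (K m x)^*) ->
  (exists x, f x != 0) ->
  let e := (#|[set x | f x != 0]|)%:R : R in
  let s := (#|[set m | g m != 0]|)%:R : R in
  let LE := (en [set x | f x != 0])%:R : R in
  let LS := (en [set m | g m != 0])%:R : R in
  let nn := n%:R : R in
  exists P T F4 : R, [/\ 0 < P, 0 <= T, 0 <= F4, P ^+ 2 <= e * F4 &
     [/\ nn ^+ 3 * F4 <= nn ^+ 2 * (2 * P ^+ 2 - T)
                         + e ^+ 2 * P ^+ 2 * (LS - (2 * s ^+ 2 - s)),
         nn ^+ 3 * T <= s ^+ 2 * P ^+ 2 * LE,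
         P ^+ 2 <= s * T & nn <= e * s]].
Proof.
move=> n0 c0 cn KJ O1 O2 hf hg fnz e s LE LS nn.
have [P [T [F4 [P0 T0 F0 h1 [h2 h3 h4 h5]]]]] :=
  @core (R[i]) V n K c f g n0 c0 cn KJ O1 O2 hf hg fnz.
have rP : P \is Num.real by exact: ger0_real (ltW P0).
have rT : T \is Num.real by exact: ger0_real T0.
have rF : F4 \is Num.real by exact: ger0_real F0.
move: h1 h2 h3 h4; rewrite -[P]RRe_real // -[T]RRe_real // -[F4]RRe_real //.
move=> h1 h2 h3 h4.
exists (complex.Re P), (complex.Re T), (complex.Re F4).
rewrite /e /s /LE /LS /nn.
split.
- by rewrite -ltcR rmorph0 RRe_real.
- by rewrite -lecR rmorph0 RRe_real.
- by rewrite -lecR rmorph0 RRe_real.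
- by rewrite -lecR !(rmorph_nat, rmorphXn, rmorphM, rmorphB, rmorphD, rmorphN, rmorph_nat) ; exact: h1.
split.
- by rewrite -lecR !(rmorph_nat, rmorphXn, rmorphM, rmorphB, rmorphD, rmorphN, rmorph_nat) ; exact: h2.
- by rewrite -lecR !(rmorph_nat, rmorphXn, rmorphM, rmorphB, rmorphD, rmorphN, rmorph_nat) ; exact: h3.
- by rewrite -lecR !(rmorph_nat, rmorphXn, rmorphM, rmorphB, rmorphD, rmorphN, rmorph_nat) ; exact: h4.
- by rewrite -lecR !(rmorph_nat, rmorphXn, rmorphM, rmorphB, rmorphD, rmorphN, rmorph_nat); exact: h5.
Qed.

Lemma eqle (R : numDomainType) (x y : R) : x = y -> x <= y.
Proof. by move=> ->. Qed.

Lemma cbrt_ge (R : realType) (y x : R) : 0 <= y -> y ^+ 3 <= x -> y <= cbrt x.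
Proof.
move=> y0 yx.
have x0 : 0 <= x by apply: le_trans yx; rewrite exprn_ge0.
rewrite /cbrt x0.
have -> : y = (y ^+ 3) `^ (3%:R^-1).
  by rewrite -powR_mulrn // -powRrM mulfV ?pnatr_eq0 // powRr1.
by apply: ge0_ler_powR; rewrite ?invr_ge0 ?ler0n // nnegrE ?exprn_ge0.
Qed.

Lemma final (R : realType) (n e s LS LE P T F4 : R) :
  0 < n -> 0 < e -> 1 <= s -> 0 <= LE ->
  0 < P -> 0 <= T -> 0 <= F4 -> P ^+ 2 <= e * F4 ->
  n ^+ 3 * F4 <= n ^+ 2 * (2 * P ^+ 2 - T) + e ^+ 2 * P ^+ 2 * (LS - (2 * s ^+ 2 - s)) ->
  n ^+ 3 * T <= s ^+ 2 * P ^+ 2 * LE -> P ^+ 2 <= s * T -> n <= e * s ->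
  n <= e * cbrt (LS - s ^+ 2 * (1 - n / (e * s))
        - s * (s - 1) * (1 - Num.sqrt (n / (e * s)) * Num.sqrt (LE / e ^+ 3))).
Proof.
move=> n0 e0 s1 LE0 P0 T0 F0 h1 h2 h3 h4 h5.
have s0 : 0 < s by apply: lt_le_trans s1; exact: ltr01.
set Z := Num.sqrt (n / (e * s)) * Num.sqrt (LE / e ^+ 3).
have hZ2 : Z ^+ 2 * (s * e ^+ 4) = n * LE.
  have q1 : 0 <= n / (e * s) by rewrite divr_ge0 ?mulr_ge0 // ltW.
  have q2 : 0 <= LE / e ^+ 3 by rewrite divr_ge0 // exprn_ge0 // ltW.
  rewrite /Z exprMn !sqr_sqrtr //.
  by field; rewrite (gt_eqF e0) (gt_eqF s0).
have Z0 : 0 <= Z by rewrite mulr_ge0 ?sqrtr_ge0.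
clearbody Z.
have A : n ^+ 3 * P ^+ 2 <= e * n ^+ 2 * (2 * P ^+ 2 - T)
                           + e ^+ 3 * P ^+ 2 * (LS - (2 * s ^+ 2 - s)).
  apply: le_trans (_ : e * (n ^+ 3 * F4) <= _).
    by rewrite [e * _]mulrCA; apply: ler_wpM2l => //; exact: exprn_ge0 (ltW n0).
  by apply: (le_trans (ler_wpM2l (ltW e0) h2)); apply: eqle; ring.
have B1 : e * n ^+ 2 * P ^+ 2 <= e ^+ 2 * n * s * P ^+ 2.
  have hp : 0 <= e * n * P ^+ 2 by rewrite mulr_ge0 ?exprn_ge0 ?mulr_ge0 ?ltW.
  apply: le_trans (_ : e * n * P ^+ 2 * n <= _); first by apply: eqle; ring.
  by apply: (le_trans (ler_wpM2l hp h5)); apply: eqle; ring.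
have B2 : e * n ^+ 2 * (P ^+ 2 - T) <= e ^+ 3 * s * (s - 1) * Z * P ^+ 2.
  have R0 : 0 <= e ^+ 3 * s * (s - 1) * Z * P ^+ 2.
    apply: mulr_ge0; last exact: exprn_ge0 (ltW P0).
    apply: mulr_ge0 => //; apply: mulr_ge0; last by rewrite subr_ge0.
    by apply: mulr_ge0; [exact: exprn_ge0 (ltW e0)| exact: ltW s0].
  have [hD|hD] := lerP (P ^+ 2 - T) 0.
    apply: (le_trans _ R0); apply: mulr_ge0_le0 => //.
    by apply: mulr_ge0; [exact: ltW e0| exact: exprn_ge0 (ltW n0)].
  have C1 : s * (P ^+ 2 - T) ^+ 2 <= (s - 1) ^+ 2 * T * P ^+ 2.
    rewrite -subr_ge0.
    have -> : (s - 1) ^+ 2 * T * P ^+ 2 - s * (P ^+ 2 - T) ^+ 2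
            = (s * T - P ^+ 2) * (s * P ^+ 2 - T) by ring.
    apply: mulr_ge0; first by rewrite subr_ge0.
    rewrite subr_ge0; apply: (@le_trans _ _ (P ^+ 2)); first by rewrite -subr_ge0 ltW.
    rewrite -{1}[P ^+ 2]mul1r; apply: ler_wpM2r => //; exact: exprn_ge0 (ltW P0).
  have C2 : n ^+ 3 * (P ^+ 2 - T) ^+ 2 <= s * (s - 1) ^+ 2 * LE * P ^+ 4.
    rewrite -(ler_pM2l s0).
    apply: le_trans (_ : n ^+ 3 * ((s - 1) ^+ 2 * T * P ^+ 2) <= _).
      by rewrite [s * _]mulrCA; apply: ler_wpM2l => //; exact: exprn_ge0 (ltW n0).
    have hq : 0 <= (s - 1) ^+ 2 * P ^+ 2.
      by apply: mulr_ge0; apply: exprn_ge0; [rewrite subr_ge0 | exact: ltW P0].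
    apply: le_trans (_ : (s - 1) ^+ 2 * P ^+ 2 * (n ^+ 3 * T) <= _).
      by apply: eqle; ring.
    by apply: (le_trans (ler_wpM2l hq h3)); apply: eqle; ring.
  have L0 : 0 <= e * n ^+ 2 * (P ^+ 2 - T).
    apply: mulr_ge0; last exact: ltW hD.
    by apply: mulr_ge0; [exact: ltW e0| exact: exprn_ge0 (ltW n0)].
  rewrite -(ler_pXn2r (n := 2)) ?nnegrE //.
  apply: le_trans (_ : e ^+ 2 * n * (s * (s - 1) ^+ 2 * LE * P ^+ 4) <= _).
    have -> : (e * n ^+ 2 * (P ^+ 2 - T)) ^+ 2 = e ^+ 2 * n * (n ^+ 3 * (P ^+ 2 - T) ^+ 2) by ring.
    apply: ler_wpM2l => //.
    by apply: mulr_ge0; [exact: exprn_ge0 (ltW e0)| exact: ltW n0].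
  apply: eqle.
  have -> : (e ^+ 3 * s * (s - 1) * Z * P ^+ 2) ^+ 2
     = e ^+ 2 * s * (s - 1) ^+ 2 * P ^+ 4 * (Z ^+ 2 * (s * e ^+ 4)) by ring.
  by rewrite hZ2; ring.
have key : n ^+ 3 <= e ^+ 3 * (LS - (2 * s ^+ 2 - s)) + e ^+ 2 * n * s
                      + e ^+ 3 * s * (s - 1) * Z.
  have P2 : 0 < P ^+ 2 by rewrite exprn_gt0.
  rewrite -(ler_pM2r P2).
  apply: le_trans A _.
  have -> : e * n ^+ 2 * (2 * P ^+ 2 - T) = e * n ^+ 2 * P ^+ 2 + e * n ^+ 2 * (P ^+ 2 - T) by ring.
  have := lerD B1 B2.
  move=> h; rewrite -subr_ge0; rewrite -subr_ge0 in h.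
  by apply: le_trans h _; apply: eqle; ring.
have ne : 0 <= n / e by rewrite divr_ge0 ?ltW.
apply: le_trans (_ : e * (n / e) <= _).
  by apply: eqle; field; rewrite gt_eqF.
rewrite ler_pM2l //; apply: cbrt_ge => //.
rewrite -(ler_pM2l (exprn_gt0 3 e0)).
have -> : e ^+ 3 * (n / e) ^+ 3 = n ^+ 3 by field; rewrite gt_eqF.
apply: le_trans key _.
apply: eqle.
rewrite -/Z; field; rewrite ?gt_eqF //.
Qed.

Theorem mainTheorem1 (R : realType) (N d : nat) (f : 'rV['Z_N]_d -> R[i]) :
  (2 <= N)%N -> (1 <= d)%N -> (exists x, f x != 0) ->
  let E := supp f in
  let S := supp (dft f) in
  let Nd : R := (N ^ d)%:R in
  let e : R := #|E|%:R in
  let s : R := #|S|%:R in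
  let LE : R := (energy E)%:R in
  let LS : R := (energy S)%:R in
  Nd <= e * cbrt (LS - s ^+ 2 * (1 - Nd / (e * s))
                  - s * (s - 1) * (1 - Num.sqrt (Nd / (e * s)) * Num.sqrt (LE / e ^+ 3)))
  /\
  Nd <= s * cbrt (LE - e ^+ 2 * (1 - Nd / (e * s))
                  - e * (e - 1) * (1 - Num.sqrt (Nd / (e * s)) * Num.sqrt (LS / s ^+ 3))).
Proof.
move=> hN hd fnz E S Nd e s LE LS.
have n0 : (0 < N ^ d)%N by rewrite expn_gt0 (ltnW hN).
pose Kf := @K R N d.
have KJf := @KJ R N d.
have O1f := @O1 R N d hN.
have O2f := @O2 R N d hN.
have hff := @hf R N d hN f.
have hgf := @hg R N d f.
have c0 := @cc_ge0 R N d.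
have c2 := @cc2 R N d hN.
have pos (k : nat) (x y : R) : 0 < x -> 0 <= y -> x ^+ 2 <= k%:R * y -> 1 <= (k%:R : R).
  move=> x0 y0 h; rewrite ler1n lt0n; apply/negP => /eqP k0.
  by move: h; rewrite k0 mul0r leNgt exprn_gt0.
split.
  have [P [T [F4 [P0 T0 F0 h1 [h2 h3 h4 h5]]]]] :=
    @core_R R _ (N ^ d) Kf (cc R N d) f (dft f) n0 c0 c2 KJf O1f O2f hff hgf fnz.
  have e1 := pos _ _ _ P0 F0 h1.
  have s1 := pos _ _ _ P0 T0 h4.
  apply: (@final R Nd e s LS LE P T F4) => //.
  - by rewrite ltr0n.
  - by apply: lt_le_trans e1; exact: ltr01.
pose Kg := fun x m => (Kf m x)^*.
have KJg m x : Kg m x * (Kg m x)^* = 1 by rewrite /Kg conjCK mulrC KJf.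
have O1g a b c' e' : \sum_x Kg a x * Kg b x * (Kg c' x)^* * (Kg e' x)^*
      = (N ^ d)%:R * (a + b == c' + e')%:R.
  by rewrite -O2f; apply: eq_bigr => x _; rewrite /Kg !conjCK.
have O2g a b c' e' : \sum_x (Kg x a)^* * (Kg x b)^* * Kg x c' * Kg x e'
      = (N ^ d)%:R * (a + b == c' + e')%:R.
  by rewrite -O1f; apply: eq_bigr => x _; rewrite /Kg !conjCK.
have hfg x : dft f x = cc R N d * \sum_m f m * Kg m x by rewrite hgf.
have hgg m : f m = cc R N d * \sum_x dft f x * (Kg m x)^*.
  by rewrite hff; congr (_ * _); apply: eq_bigr => x _; rewrite /Kg conjCK.
have gnz : exists x, dft f x != 0.
  case: fnz => x0 fx0.
  case: (boolP [exists x, dft f x != 0]) => [/existsP //|/existsPn h].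
  have := @parseval _ _ Kf (cc R N d) f (dft f) c0 hff hgf.
  rewrite big1 => [|m _]; last by have := h m; rewrite negbK => /eqP ->; rewrite normr0 expr0n.
  move/esym/eqP; rewrite psumr_eq0 => [|x _]; last exact: exprn_ge0.
  move/allP => /(_ x0 (mem_index_enum _)) /=; rewrite expf_eq0 /= normr_eq0.
  by rewrite (negbTE fx0).
have [P [T [F4 [P0 T0 F0 h1 [h2 h3 h4 h5]]]]] :=
  @core_R R _ (N ^ d) Kg (cc R N d) (dft f) f n0 c0 c2 KJg O1g O2g hfg hgg gnz.
have s1 := pos _ _ _ P0 F0 h1.
have e1 := pos _ _ _ P0 T0 h4.
rewrite [e * s]mulrC.
apply: (@final R Nd s e LE LS P T F4) => //.
- by rewrite ltr0n.
- by apply: lt_le_trans s1; exact: ltr01.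
Qed.
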